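(* Let $\varrho=\{\varrho_{t,T}\}_{t\in[0,T]}$ be a dynamic risk measure which is stochastically conditionally time-consistent, normalized, and translation invariant. Then for every $0\le t\le r\le T$ and every history $\xi_{[0,t]}\in\Xi_{0,t}$ there exists a functional $\varsigma^{\xi_{[0,t]}}_{t,r}:\mathcal L_\infty(\Xi^{\xi_t}_{t,r},P^{\xi_t}_{t,r})\to\mathbb R$, law invariant with respect to $P^{\xi_t}_{t,r}$ (i.e. its value at a random variable depends only on the distribution of that random variable under $P^{\xi_t}_{t,r}$), such that for every $c\in\mathcal L_\infty([0,T]\times\mathcal X)$ and $f\in\mathcal L_\infty(\mathcal X)$ the random variable $Z_T=\int_0^T c_\tau(X_\tau)\,d\tau+f(X_T)$ satisfies \[ \varrho_{t,T}(Z_T)(\xi_{[0,t]})=\int_0^t c_\tau(\xi_\tau)\,d\tau+\varsigma^{\xi_{[0,t]}}_{t,r}\Big(I^{\xi_t}_{t,r}(c)+\varrho_{r,T}\big(I^{X^{t,\xi_t}_r}_{r,T}(c)+f(X^{t,\xi_t}_T)\big)\Big), \] where the argument of $\varsigma^{\xi_{[0,t]}}_{t,r}$ is the random variable on $(\Xi^{\xi_t}_{t,r},P^{\xi_t}_{t,r})$ obtained by evaluating $\int_t^r c_\tau(X_\tau)\,d\tau+\varrho_{r,T}\big(\int_r^T c_\tau(X_\tau)\,d\tau+f(X_T)\big)$ along paths whose restriction to $[0,t]$ is $\xi_{[0,t]}$.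
   Context: Let $\mathcal X$ be a finite state space, $T>0$, and $\{X_t\}_{0\le t\le T}$ a continuous-time Markov chain with values in $\mathcal X$, starting at a fixed state $x_0$, with transition function $Q_{t,r}(y|x)=P(X_r=y\mid X_t=x)$. The transition rates $G_t(y|x)=\lim_{\tau\downarrow0}\frac1\tau[Q_{t,t+\tau}(y|x)-\delta_x(y)]$ are assumed to exist, be finite and be uniformly bounded over $t\in[0,T]$. For $0\le t<r\le T$ and $\xi\in\mathcal X$, $\Xi^{\xi}_{t,r}$ denotes the space of piecewise-constant right-continuous paths $[t,r]\to\mathcal X$ starting at $\xi$, $P^{\xi}_{t,r}$ the law on it of the chain started at $\xi$ at time $t$, $X^{t,\xi}=\{X^{t,\xi}_\tau\}$ a process with this law, and $\Xi_{0,t}=\bigcup_{\xi}\Xi^{\xi}_{0,t}$. $\{\mathcal F_t\}$ is the filtration generated by $X$, and $\mathcal Z_t$ is the space of bounded $\mathcal F_t$-measurable random variables, identified with measurable functionals of the path $\xi_{[0,t]}$. $\mathcal L_\infty([t,r]\times\mathcal X)$ is the space of measurable essentially bounded $c:[t,r]\times\mathcal X\to\mathbb R$, $\mathcal L_\infty(\mathcal X)$ the space of functions $\mathcal X\to\mathbb R$. For $c$ and $\xi_t\in\mathcal X$, $I^{\xi_t}_{t,r}(c)=\int_t^r c_\tau(X^{t,\xi_t}_\tau)\,d\tau$. A conditional risk measure is a mapping $\varrho_{t,T}:\mathcal Z_T\to\mathcal Z_t$; a dynamic risk measure is a family $\{\varrho_{t,T}\}_{t\in[0,T]}$. It is normalized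 if $\varrho_{t,T}(0)=0$; translation invariant if $\varrho_{t,T}(Z_t+Z_T)=Z_t+\varrho_{t,T}(Z_T)$ for all $Z_t\in\mathcal Z_t,Z_T\in\mathcal Z_T$. For a history $\xi_{[0,t]}$ and $r\in[t,T]$, $\varrho_{r,T}(Z_T)\mid\xi_{[0,t]}$ denotes $\varrho_{r,T}(Z_T)$ regarded as a function of the path on $[t,r]$ continuing $\xi_{[0,t]}$, with distribution induced by $P^{\xi_t}_{t,r}$; $\varrho_{t,T}(Z_T)(\xi_{[0,t]})$ is the value at the history. $U\preceq_{\rm st}V$ means $P(U>\eta)\le P(V>\eta)$ for all $\eta\in\mathbb R$. $\varrho$ is stochastically conditionally time-consistent if for all $0\le t\le r\le T$, all $\xi_{[0,t]}$ and all $Z_T,W_T\in\mathcal Z_T$, $\varrho_{r,T}(Z_T)\mid\xi_{[0,t]}\preceq_{\rm st}\varrho_{r,T}(W_T)\mid\xi_{[0,t]}$ implies $\varrho_{t,T}(Z_T)(\xi_{[0,t]})\le\varrho_{t,T}(W_T)(\xi_{[0,t]})$. *)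

(* Defs.v *)
From HB Require Import structures.
From mathcomp Require Import all_boot all_order all_algebra.
From mathcomp Require Import all_classical all_reals all_analysis.

Set Implicit Arguments.
Unset Strict Implicit.
Unset Printing Implicit Defensive.
Import Order.TTheory GRing.Theory Num.Theory.
Import numFieldNormedType.Exports.
Local Open Scope classical_set_scope.
Local Open Scope ring_scope.

Section Paths.
Variables (R : realType) (X : finType).

(* [w] is piecewise constant and right-continuous on every compact interval
   [a,b]: there is a finite set J of jump times such that w is constant on
   every [u,v] ⊆ [a,b] with no jump time in ]u,v]. *)
Definition pcrc (w : R -> X) : Prop :=
  forall a b : R, exists J : seq R, forall u v : R,
    a <= u -> u <= v -> v <= b ->
    (forall j, j \in J -> ~ (u < j /\ j <= v)) -> w u = w v.

End Paths.

(* The parameter x0 (the initial state of the chain) only provides the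
   point (constant path x0) required by mathcomp-analysis' measurable types. *)
Record Path (R : realType) (X : finType) (x0 : X) := MkPath {
  pth :> R -> X ;
  pth_pcrc : pcrc pth }.
Arguments Path : clear implicits.
Arguments MkPath {R X x0} pth pth_pcrc.

Section PathStructure.
Variables (R : realType) (X : finType) (x0 : X).

Lemma pcrc_cst : pcrc (fun _ : R => x0).
Proof. by move=> a b; exists [::]. Qed.

HB.instance Definition _ := gen_eqMixin (Path R X x0).
HB.instance Definition _ := gen_choiceMixin (Path R X x0).
HB.instance Definition _ := isPointed.Build (Path R X x0) (MkPath (fun _ : R => x0) (@pcrc_cst)).

Definition coord_gen (a b : R) : set (set (Path R X x0)) :=
  [set A | exists (s : R) (x : X), a <= s <= b /\ A = [set w : Path R X x0 | w s = x]].

Definition Fsig (a b : R) : set (set (Path R X x0)) := <<s coord_gen a b >>.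

Definition cyl_gen : set (set (Path R X x0)) :=
  [set A | exists (s : R) (x : X), A = [set w : Path R X x0 | w s = x]].

End PathStructure.
Arguments coord_gen {R X} x0 a b.
Arguments Fsig {R X} x0 a b.
Arguments cyl_gen : clear implicits.

Definition PathM (R : realType) (X : finType) (x0 : X) :=
  g_sigma_algebraType (cyl_gen R X x0).

Arguments PathM : clear implicits.

Section Defs.
Variables (R : realType) (X : finType) (x0 : X).
Local Notation Path := (Path R X x0).

Definition concat_fun (t : R) (xi w : Path) : R -> X :=
  fun s => if s < t then xi s else w s.

Lemma concat_pcrc (t : R) (xi w : Path) : pcrc (concat_fun t xi w).
Proof.
move=> a b.
have [J1 H1] := pth_pcrc xi a b; have [J2 H2] := pth_pcrc w a b.
exists (t :: J1 ++ J2) => u v au uv vb nJ; rewrite /concat_fun.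
have nJ1 j : j \in J1 -> ~ (u < j /\ j <= v).
  by move=> jJ; apply: nJ; rewrite inE mem_cat jJ orbT.
have nJ2 j : j \in J2 -> ~ (u < j /\ j <= v).
  by move=> jJ; apply: nJ; rewrite inE mem_cat jJ !orbT.
have nt : ~ (u < t /\ t <= v) by apply: nJ; rewrite inE eqxx.
have [vt|vt] := ltP v t.
  by rewrite (le_lt_trans uv vt); exact: H1.
have [ut|ut] := ltP u t; first by exfalso; apply: nt.
exact: H2.
Qed.

Definition concat (t : R) (xi w : Path) : Path := MkPath (concat_fun t xi w) (concat_pcrc t xi w).

Definition Icost (c : R -> X -> R) (a b : R) (w : Path) : R :=
  (\int[lebesgue_measure]_(tau in `[a, b]) c tau (w tau))%R.

Definition Zspace (t : R) (Z : Path -> R) : Prop :=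
  (forall B : set R, measurable B -> Fsig x0 0 t (Z @^-1` B)) /\
  (exists M : R, forall w, `|Z w| <= M).

Definition Linf_cost (T : R) (c : R -> X -> R) : Prop :=
  forall x : X, measurable_fun `[0, T] (fun tau => c tau x) /\
    exists M : R, {ae lebesgue_measure, forall tau : R, 0 <= tau <= T -> `|c tau x| <= M}.

(* the transition function Q (Q t r x y = Q_{t,r}(y|x)) has transition rates
   G_t(y|x), existing, finite and uniformly bounded over t *)
Definition has_bounded_rates (T : R) (Q : R -> R -> X -> X -> R) : Prop :=
  exists (G : R -> X -> X -> R) (M : R), forall t x y, 0 <= t < T ->
    ((fun tau => (Q t (t + tau) x y - (x == y)%:R) / tau) @ 0^'+ --> G t x y)
    /\ `|G t x y| <= M.

Fixpoint fdd_prod (Q : R -> R -> X -> X -> R) (p : R * X) (ss : seq (R * X)) : R :=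
  if ss is q :: ss' then Q p.1 q.1 p.2 q.2 * fdd_prod Q q ss' else 1.

Definition chain_law (Q : R -> R -> X -> X -> R) (t r : R) (x : X)
    (P : probability (PathM R X x0) R) : Prop :=
  forall ss : seq (R * X),
    sorted (fun p q : R * X => p.1 < q.1) ((t, x) :: ss) ->
    (forall p, p \in ss -> p.1 <= r) ->
    P [set w : PathM R X x0 | w t = x /\ forall p, p \in ss -> w p.1 = p.2]
      = (fdd_prod Q (t, x) ss)%:E.

Definition dynamic_risk_measure (T : R) (rho : R -> (Path -> R) -> (Path -> R)) :=
  forall t Z, 0 <= t <= T -> Zspace T Z -> Zspace t (rho t Z).

Definition normalized (T : R) (rho : R -> (Path -> R) -> (Path -> R)) :=
  forall t, 0 <= t <= T -> rho t (fun _ => 0) = (fun _ => 0).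

Definition translation_invariant (T : R) (rho : R -> (Path -> R) -> (Path -> R)) :=
  forall t Zt ZT, 0 <= t <= T -> Zspace t Zt -> Zspace T ZT ->
    rho t (fun w => Zt w + ZT w) = (fun w => Zt w + rho t ZT w).

Definition st_le (P : probability (PathM R X x0) R) (U V : Path -> R) :=
  forall eta : R,
    (P [set w | (eta < U w)%R] <= P [set w | (eta < V w)%R])%E.

(* rho_{r,T}(Z) | xi_{[0,t]} : the function of the path on [t,r] continuing xi,
   under the law P^{xi_t}_{t,r} *)
Definition cond_given (rho : R -> (Path -> R) -> (Path -> R)) (t r : R)
    (xi : Path) (Z : Path -> R) : Path -> R :=
  fun w => rho r Z (concat t xi w).

Definition stoch_cond_time_consistent (T : R)
    (P : R -> R -> X -> probability (PathM R X x0) R)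
    (rho : R -> (Path -> R) -> (Path -> R)) :=
  forall t r (xi : Path) Z W, 0 <= t -> t <= r -> r <= T ->
    Zspace T Z -> Zspace T W ->
    st_le (P t r (xi t)) (cond_given rho t r xi Z) (cond_given rho t r xi W) ->
    rho t Z xi <= rho t W xi.

Definition Linf_path (t r : R) (P : probability (PathM R X x0) R) (V : Path -> R) :=
  (forall B : set R, measurable B -> Fsig x0 t r (V @^-1` B)) /\
  exists M : R, {ae P, forall w : PathM R X x0, `|V w| <= M}.

Definition law_invariant (t r : R) (P : probability (PathM R X x0) R)
    (vs : (Path -> R) -> R) :=
  forall V W, Linf_path t r P V -> Linf_path t r P W ->
    (forall B : set R, measurable B -> P (V @^-1` B) = P (W @^-1` B)) ->
    vs V = vs W.

End Defs.

(* Main.v *)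
Require Import Defs.
Set Implicit Arguments. Unset Strict Implicit.
From HB Require Import structures.
From mathcomp Require Import all_boot all_order all_algebra.
From mathcomp Require Import all_classical all_reals all_analysis.
Import Order.TTheory GRing.Theory Num.Theory.
Local Open Scope classical_set_scope.
Local Open Scope ring_scope.
From mathcomp Require Import measurable_realfun.
From mathcomp Require Import lra.
Import numFieldNormedType.Exports.

Section P1.
Context (R : realType) (X : finType) (x0 : X).
Local Notation Path := (Path R X x0).
Local Notation PS a b := (g_sigma_algebraType (coord_gen x0 a b)).

Lemma FM_of (a b : R) (F : Path -> R) :
  measurable_fun [set: PS a b] (F : PS a b -> R) ->
  forall B, measurable B -> Fsig x0 a b (F @^-1` B).
Proof. by move=> mF B mB; have := mF measurableT B mB; rewrite setTI. Qed.

Lemma pts_meas (a b : R) (L : seq (R * X)) :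
  (forall p, p \in L -> a <= p.1 <= b) ->
  measurable [set w : PS a b | forall p, p \in L -> w p.1 = p.2].
Proof.
elim: L => [_|p L IH HL].
  rewrite (_ : [set w | _] = setT); first exact: measurableT.
  by apply/seteqP; split => // w _ p; rewrite in_nil.
set A := [set w | _]; have -> : A = [set w : PS a b | w p.1 = p.2] `&`
   [set w : PS a b | forall p, p \in L -> w p.1 = p.2]; last first.
  apply: measurableI; last by apply: IH => q qL; apply: HL; rewrite inE qL orbT.
  apply: sub_gen_smallest; exists p.1, p.2; split => //.
  by apply: HL; rewrite inE eqxx.
apply/seteqP; split => w /=.
  by move=> H; split; [apply: H; rewrite inE eqxx|move=> q qL; apply: H; rewrite inE qL orbT].
by move=> [H1 H2] q; rewrite inE => /orP[/eqP->//|/H2].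
Qed.

Lemma fincoord_meas (a b : R) (S : seq R) (F : Path -> R) :
  (forall s, s \in S -> a <= s <= b) ->
  (forall w w' : Path, (forall s, s \in S -> w s = w' s) -> F w = F w') ->
  measurable_fun [set: PS a b] (F : PS a b -> R).
Proof.
move=> HS HF.
pose n := size S.
pose C (u : {ffun 'I_n -> X}) : set (PS a b) :=
  [set w : PS a b | forall p, p \in [seq (nth 0 S i, u i) | i : 'I_n <- enum 'I_n] -> w p.1 = p.2].
have mC u : measurable (C u).
  apply: pts_meas => p; case/mapP => i _ -> /=; apply: HS; exact: mem_nth.
pose val u : R := if pselect (exists w, C u w) is left H then F (projT1 (cid H)) else 0.
have memC (w : Path) u : C u w <-> forall i : 'I_n, w (nth 0 S i) = u i.
  split => [H i|H p /mapP[i _ ->]//=]; apply: (H (nth 0 S i, u i)).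
  by apply/mapP; exists i => //; rewrite mem_enum.
pose uw (w : Path) := [ffun i : 'I_n => w (nth 0 S i)].
have Cuw w : C (uw w) w by apply/memC => i; rewrite ffunE.
have Cuniq w u : C u w -> u = uw w.
  by move/memC => H; apply/ffunP => i; rewrite ffunE H.
have Feq : (F : PS a b -> R) = fun w => \sum_(u : {ffun 'I_n -> X}) (\1_(C u) w * val u).
  apply/funext => w; rewrite (bigD1 (uw w)) //= big1 ?addr0.
    rewrite indicE mem_set // mul1r /val; case: pselect => [H|[]]; last by exists w.
    case: cid => w' /= Hw'; apply: HF => s sS.
    have [i ->] : exists i : 'I_n, s = nth 0 S i.
      have iS : (index s S < n)%N by rewrite index_mem.
      by exists (Ordinal iS); rewrite /= nth_index.
    by move/memC : (Cuw w) => ->; move/memC : Hw' => ->.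
  move=> u uneq; rewrite indicE memNset ?mul0r // => Cw.
  by move: uneq; rewrite (Cuniq _ _ Cw) eqxx.
rewrite Feq; apply: measurable_sum => u.
apply: measurable_realfun.measurable_funM; first exact: measurable_realfun.measurable_indic.
exact: measurable_cst.
Qed.

End P1.

Section P2.
Context (R : realType) (X : finType).
Local Notation mu := (@lebesgue_measure R).

Lemma Linf_int (T : R) (c : R -> X -> R) : 0 <= T -> Linf_cost T c ->
  forall x, mu.-integrable `[0, T] (EFin \o (fun tau => c tau x)).
Proof.
move=> T0 Hc x; have [mc [M HM]] := Hc x.
apply/integrableP; split; first exact/measurable_EFinP.
apply: (le_lt_trans (integral_le_bound (`|M|%:E) _ _ _ _)) => //.
- exact/measurable_EFinP.
- apply: filterS HM; first exact: (ae_filter_ringOfSetsType mu).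
  move=> tau H Dt; move: Dt; rewrite /= in_itv /= => Dt.
  by rewrite lee_fin (le_trans (H Dt)) // ler_norm.
- set m := (X in (_ * X < _)%E).
  have -> : m = (lebesgue_measure `[0, T]) by [].
  rewrite lebesgue_measure_itv /= lte_fin.
  by case: ifP => _; rewrite -?EFinD ?mule0 ?ltry // -EFinM ltry.
Qed.

Definition Gc (c : R -> X -> R) (tau : R) := \sum_(x : X) `|c tau x|.

Lemma Gc_int (T : R) (c : R -> X -> R) : 0 <= T -> Linf_cost T c ->
  mu.-integrable `[0, T] (EFin \o Gc c).
Proof.
move=> T0 Hc.
have -> : EFin \o Gc c = fun tau => (\sum_(x <- enum X) (`|c tau x|)%:E)%E.
  by apply/funext => tau; rewrite sumEFin /Gc /= big_enum.
apply: (@integrable_sum _ _ _ mu _ (measurable_itv _)) => x _.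
have H := integrable_norm (Linf_int T0 Hc x); exact H.
Qed.

End P2.

Section P3.
Context (R : realType) (X : finType).

Lemma finite_avoid (tau : R) (J : seq R) :
  exists2 d : R, 0 < d & forall j, j \in J -> j != tau -> d <= `|j - tau|.
Proof.
elim: J => [|j J [d dp Hd]]; first by exists 1 => //.
have [jt|jt] := eqVneq j tau.
  exists d => // k; rewrite inE => /orP[/eqP->|/Hd//]; by rewrite jt eqxx.
exists (Num.min d `|j - tau|).
  by rewrite lt_min dp normr_gt0 subr_eq0 jt.
move=> k; rewrite inE => /orP[/eqP->|kJ kt]; first by rewrite ge_min lexx orbT.
by rewrite ge_min Hd.
Qed.

Lemma meas_seq (s : seq R) : measurable [set t : R | t \in s].
Proof.
elim: s => [|y s IH].
  by rewrite (_ : [set t : R | _] = set0); [exact: measurable0|apply/seteqP; split].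
have -> : [set t : R | t \in y :: s] = [set y] `|` [set t | t \in s].
  by apply/seteqP; split => t /=; rewrite inE; [move/orP => [/eqP->|]; [left|right]|move=> [->|->]; rewrite ?eqxx ?orbT].
exact: measurableU.
Qed.

Definition LC (A B : R) (p : R -> X) (J : seq R) :=
  forall tau, A < tau < B -> tau \notin J ->
    exists2 d : R, 0 < d & forall y, `|y - tau| < d -> p y = p tau.

Lemma lc_level (A B : R) (p : R -> X) (J : seq R) x : LC A B p J ->
  measurable [set t : R | A <= t <= B /\ p t = x].
Proof.
move=> HLC.
have -> : [set t : R | A <= t <= B /\ p t = x] =
   [set t | (A < t < B) /\ (t \notin J) /\ p t = x] `|`
   [set t | t \in [seq j <- A :: B :: J | (A <= j <= B) && (p j == x)]].
  apply/seteqP; split => t.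
    move=> [/andP[At tB] ptx].
    have [/andP[At' tB']|] := boolP ((A < t) && (t < B)).
      have [tJ|tJ] := boolP (t \in J); last by left => /=; split; [rewrite At' tB'|split].
      by right; change (t \in [seq j <- A :: B :: J | (A <= j <= B) && (p j == x)]); rewrite mem_filter At tB ptx eqxx !inE tJ !orbT.
    rewrite negb_and -!leNgt => H; right; change (t \in [seq j <- A :: B :: J | (A <= j <= B) && (p j == x)]); rewrite mem_filter At tB ptx eqxx /= !inE.
    case/orP: H => H.
      by rewrite (@le_anti _ _ t A (introT andP (conj H At))) eqxx.
    by rewrite (@le_anti _ _ t B (introT andP (conj tB H))) eqxx orbT.
  move=> [[/andP[At tB] [_ ptx]]|]; first by split => //; rewrite !ltW.
  move=> H; change (is_true (t \in [seq j <- A :: B :: J | (A <= j <= B) && (p j == x)])) in H.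
  by move: H; rewrite mem_filter => /andP[/andP[/andP[At tB] /eqP ptx] _]; split => //; rewrite At tB.
apply: measurableU; last exact: meas_seq.
apply: open_measurable; rewrite openE => t [/andP[At tB] [tJ ptx]].
have [d1 d1p H1] := HLC t (introT andP (conj At tB)) tJ.
have [d2 d2p H2] := finite_avoid t J.
pose d := Num.min (Num.min d1 d2) (Num.min (t - A) (B - t)).
have dp : 0 < d by rewrite !lt_min d1p d2p !subr_gt0 At tB.
apply/nbhs_ballP; exists d => //= y; rewrite /ball_ /= => hy.
have hy' : `|y - t| < d by rewrite distrC.
have := hy'; rewrite !lt_min => /andP[/andP[hy1 hy2] /andP[hyA hyB]].
move: hyA hyB; rewrite ltr_norml => /andP[hyA1 hyA2]; rewrite ltr_norml => /andP[hyB1 hyB2].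
split; first by apply/andP; split; lra.
split; last by rewrite H1.
apply/negP => yJ; have [yt|yt] := eqVneq y t; first by move: tJ; rewrite -yt yJ.
by have := H2 y yJ yt; rewrite leNgt hy2.
Qed.

Lemma lc_meas (c : R -> X -> R) (A B : R) (p : R -> X) (J : seq R) :
  (forall x, measurable_fun `[A, B] (c^~ x)) -> LC A B p J ->
  measurable_fun `[A, B] (fun t => c t (p t)).
Proof.
move=> mc HLC.
pose S x := [set t : R | A <= t <= B /\ p t = x].
apply: (@eq_measurable_fun _ _ _ _ _ (fun t => \sum_(x <- enum X) (c t x * \1_(S x) t))).
  move=> t; rewrite inE /= in_itv /= => tAB.
  rewrite big_enum (bigD1 (p t)) //= big1 ?addr0.
    by rewrite indicE mem_set ?mulr1.
  move=> x xp; rewrite indicE memNset ?mulr0 //= => -[_ ptx].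
  by move: xp; rewrite ptx eqxx.
apply: measurable_sum => x; apply: measurable_funM; first exact: mc.
apply: measurable_indic; exact: (@lc_level A B p J x HLC).
Qed.

Lemma pcrc_lc (p : R -> X) (A B : R) : pcrc p -> exists J, LC A B p J.
Proof.
move=> /(_ A B) [J HJ]; exists J => t /andP[At tB] tJ.
have [d2 d2p H2] := finite_avoid t J.
pose d := Num.min d2 (Num.min (t - A) (B - t)).
have dp : 0 < d by rewrite !lt_min d2p !subr_gt0 At tB.
exists d => // y; rewrite !lt_min => /andP[hy2 /andP[hyA hyB]].
move: hyA hyB; rewrite ltr_norml => /andP[hyA1 hyA2]; rewrite ltr_norml => /andP[hyB1 hyB2].
have [yt|ty] := leP y t.
  apply: HJ; try lra.
  move=> j jJ [yj jt]; have jt' : j != t by apply/eqP => E; move: tJ; rewrite -E jJ.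
  have := H2 j jJ jt'; rewrite ler0_norm; last lra.
  move=> H; have : `|y - t| < d2 by []. rewrite ler0_norm; last lra. lra.
symmetry; apply: HJ; try lra.
move=> j jJ [tj jy]; have jt' : j != t by apply/eqP => E; move: tj; rewrite E ltxx.
have := H2 j jJ jt'; rewrite ger0_norm; last lra.
move=> H; have : `|y - t| < d2 by []. rewrite ger0_norm; last lra. lra.
Qed.

End P3.

Section P4.
Context (R : realType).
Local Notation mu := (@lebesgue_measure R).

Lemma Rint_split (f : R -> R) (a b e : R) : a <= b -> b <= e ->
  mu.-integrable `[a, e] (EFin \o f) ->
  \int[mu]_(t in `[a, e]) f t = \int[mu]_(t in `[a, b]) f t + \int[mu]_(t in `[b, e]) f t.
Proof.
move=> ab be If.
have := @Rintegral_itvB _ f (BLeft a) (BRight e) b If.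
rewrite !bnd_simp => /(_ ab be) H.
rewrite -(@Rintegral_itv_obnd_cbnd _ b (BRight e) f); last first.
  by apply: integrableS If => //; apply: subset_itv; rewrite bnd_simp.
by rewrite -H addrC subrK.
Qed.

Lemma Rint_sub (f : R -> R) (a b A B : R) : A <= a -> a <= b -> b <= B ->
  mu.-integrable `[A, B] (EFin \o f) -> (forall t, 0 <= f t) ->
  \int[mu]_(t in `[a, b]) f t <= \int[mu]_(t in `[A, B]) f t.
Proof.
move=> Aa ab bB If f0.
rewrite (@Rint_split f A a B) //; last exact: le_trans ab bB.
rewrite (@Rint_split f a b B) //; last first.
  by apply: integrableS If => //; apply: subset_itv; rewrite bnd_simp.
have h1 : 0 <= \int[mu]_(t in `[A, a]) f t by apply: Rintegral_ge0.
have h2 : 0 <= \int[mu]_(t in `[b, B]) f t by apply: Rintegral_ge0.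
move: h1 h2; set i1 := \int[mu]_(t in `[A, a]) f t; set i2 := \int[mu]_(t in `[a, b]) f t.
set i3 := \int[mu]_(t in `[b, B]) f t; move=> h1 h2.
rewrite -[X in X <= _]add0r; apply: lerD => //; rewrite -[X in X <= _]addr0; exact: lerD.
Qed.

End P4.

Section P5.
Context (R : realType) (X : finType) (x0 : X).
Local Notation mu := (@lebesgue_measure R).
Local Notation Path := (Path R X x0).
Variables (T : R) (c : R -> X -> R).
Hypotheses (T0 : 0 <= T) (Hc : Linf_cost T c).

Lemma cx_meas (A B : R) x : 0 <= A -> B <= T -> measurable_fun `[A, B] (c^~ x).
Proof.
move=> A0 BT; apply: measurable_funS (proj1 (Hc x)) => //.
by apply: subset_itv; rewrite bnd_simp.
Qed.

Lemma cG t y : `|c t y| <= Gc c t.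
Proof.
rewrite /Gc (bigD1 y) //= lerDl; exact: sumr_ge0.
Qed.

Lemma Gc_ge0 t : 0 <= Gc c t.
Proof. exact: sumr_ge0. Qed.

Lemma cp_int (p : R -> X) (A B : R) : 0 <= A -> B <= T -> (exists J, LC A B p J) ->
  mu.-integrable `[A, B] (EFin \o (fun t => c t (p t))).
Proof.
move=> A0 BT [J HJ].
have mp : measurable_fun `[A, B] (fun t => c t (p t)).
  by apply: (@lc_meas _ _ c A B p J) => // x; exact: cx_meas.
apply: (@le_integrable _ _ _ mu _ (measurable_itv _) _ (EFin \o Gc c)).
- exact/measurable_EFinP.
- by move=> t _; rewrite /= lee_fin (ger0_norm (Gc_ge0 t)) cG.
- apply: integrableS (Gc_int T0 Hc) => //.
  by apply: subset_itv; rewrite bnd_simp.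
Qed.

Lemma path_int (w : Path) (A B : R) : 0 <= A -> B <= T ->
  mu.-integrable `[A, B] (EFin \o (fun t => c t (w t))).
Proof. move=> A0 BT; apply: cp_int => //; exact: pcrc_lc (pth_pcrc w). Qed.

Lemma Icost_split (w : Path) (a b e : R) : 0 <= a -> a <= b -> b <= e -> e <= T ->
  Icost c a e w = Icost c a b w + Icost c b e w.
Proof. move=> a0 ab be eT; exact: Rint_split ab be (path_int w a0 eT). Qed.

Lemma Icost_eq (w w' : Path) (a b : R) : 0 <= a -> b <= T ->
  (forall s, a <= s < b -> w s = w' s) -> Icost c a b w = Icost c a b w'.
Proof.
move=> a0 bT ww'; rewrite /Icost.
rewrite -!Rintegral_itv_bndo_bndc; last 2 first.
- apply: integrableS (path_int w' a0 bT) => //; apply: subset_itv; by rewrite bnd_simp.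
- apply: integrableS (path_int w a0 bT) => //; apply: subset_itv; by rewrite bnd_simp.
apply: eq_Rintegral => s; rewrite inE /= in_itv /= => hs; by rewrite ww'.
Qed.

Lemma Icost_concat (t r : R) (xi w : Path) : 0 <= t -> t <= r -> r <= T ->
  Icost c 0 r (concat t xi w) = Icost c 0 t xi + Icost c t r w.
Proof.
move=> t0 tr rT; rewrite (@Icost_split _ 0 t r) //.
congr (_ + _); apply: Icost_eq => //.
- exact: le_trans tr rT.
- by move=> s /andP[_ st]; rewrite /= /concat_fun st.
- by move=> s /andP[ts _]; rewrite /= /concat_fun ltNge ts.
Qed.

Definition MG := \int[mu]_(t in `[0, T]) Gc c t.

Lemma Icost_bound (w : Path) (a b : R) : 0 <= a -> a <= b -> b <= T ->
  `|Icost c a b w| <= MG.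
Proof.
move=> a0 ab bT; rewrite /Icost.
apply: (le_trans (le_normr_Rintegral _ _)) => //.
  exact: path_int.
apply: (@le_trans _ _ (\int[mu]_(t in `[a, b]) Gc c t)).
  apply: le_Rintegral => //.
  - have := integrable_norm (path_int w a0 bT); exact.
  - apply: integrableS (Gc_int T0 Hc) => //; apply: subset_itv; by rewrite bnd_simp.
  - by move=> t _; exact: cG.
apply: Rint_sub => //; first exact: Gc_int.
exact: Gc_ge0.
Qed.

End P5.

Section P6.
Context (R : realType) (X : finType) (x0 : X).
Local Notation mu := (@lebesgue_measure R).
Local Notation Path := (Path R X x0).
Variables (a b : R).
Hypothesis ab : a < b.

Definition hh (n : nat) : R := (b - a) / n.+1%:R.
Definition mm (n : nat) (t : R) : int := Num.ceil ((t - a) / hh n).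
Definition qq (n : nat) (t : R) : R := a + (mm n t)%:~R * hh n.
Definition grid (n : nat) : seq R := [seq a + i%:R * hh n | i <- iota 0 n.+2].

Lemma hh_gt0 n : 0 < hh n.
Proof. by rewrite /hh divr_gt0 // ?subr_gt0 // ltr0n. Qed.

Lemma hhE n : hh n * n.+1%:R = b - a.
Proof. by rewrite /hh mulfVK // pnatr_eq0. Qed.

Lemma grid_itv n s : s \in grid n -> a <= s <= b.
Proof.
case/mapP => i; rewrite mem_iota add0n => /andP[_ ilt] ->.
have hp := hh_gt0 n.
have i0 : 0 <= i%:R * hh n :> R by rewrite mulr_ge0 // ltW.
have : i%:R * hh n <= n.+1%:R * hh n :> R.
  by rewrite ler_pM2r // ler_nat -ltnS.
rewrite [X in _ <= X]mulrC hhE => H; apply/andP; split; lra.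
Qed.

Lemma mm_itv n t : (mm n t - 1)%:~R < (t - a) / hh n <= (mm n t)%:~R.
Proof. exact: ceil_itv. Qed.

Lemma qq_itv n t : t <= qq n t < t + hh n.
Proof.
have hp := hh_gt0 n; have /andP[h1 h2] := mm_itv n t.
rewrite /qq; apply/andP; split.
  by rewrite -lerBlDl -ler_pdivrMr.
have h1' : ((mm n t)%:~R - 1) * hh n < t - a.
  by rewrite -ltr_pdivlMr // -[1]/(1%:~R) -intrB.
move: h1'; set M : R := (mm n t)%:~R; move=> h1'; nra.
Qed.

Lemma qq_grid n t : a <= t <= b -> qq n t \in grid n.
Proof.
move=> /andP[ha tb]; have hp := hh_gt0 n.
have /andP[h1 h2] := mm_itv n t.
have m0 : 0 <= mm n t by rewrite /mm ceil_ge0; apply: (@lt_le_trans _ _ 0) => //; rewrite divr_ge0 ?subr_ge0 // ltW.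
have mle : (mm n t <= Posz n.+1)%R.
  rewrite /mm ceil_le_int_tmp ler_pdivrMr // [X in _ <= X * _](_ : _ = n.+1%:R) // mulrC hhE; lra.
apply/mapP; exists `|mm n t|%N.
  rewrite mem_iota add0n /=; rewrite -ltz_nat gez0_abs //.
by rewrite /qq natr_absz ger0_norm.
Qed.

Lemma grid_avoid n t : a <= t <= b -> t \notin grid n ->
  (mm n t - 1)%:~R < (t - a) / hh n < (mm n t)%:~R.
Proof.
move=> tab tg; have hp := hh_gt0 n.
have /andP[h1 h2] := mm_itv n t; rewrite h1 /= lt_neqAle h2 andbT.
apply/negP => /eqP E.
have qt : qq n t = t by rewrite /qq -E mulfVK ?gt_eqF // addrC subrK.
by move: (qq_grid n tab); rewrite qt (negbTE tg).
Qed.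

Lemma qq_LC (w : Path) n : LC a b (fun t => w (qq n t)) (grid n).
Proof.
move=> t /andP[ha tb] tg; have hp := hh_gt0 n.
have tab : a <= t <= b by rewrite !ltW.
have /andP[h1 h2] := grid_avoid tab tg.
set x := (t - a) / hh n in h1 h2; set m := mm n t in h1 h2.
exists (hh n * Num.min (x - (m - 1)%:~R) (m%:~R - x)).
  by rewrite mulr_gt0 // lt_min !subr_gt0 h1 h2.
move=> y hy; congr (w _); rewrite /qq; congr (_ + _ * _); congr intr.
rewrite /mm -/m; apply: ceil_def.
have hy' : `|y - t| / hh n < Num.min (x - (m - 1)%:~R) (m%:~R - x).
  by rewrite ltr_pdivrMr // mulrC.
move: hy'; rewrite lt_min => /andP; rewrite !ltr_pdivrMr //.
have -> : (y - a) / hh n = x + (y - t) / hh n.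
  by rewrite /x -mulrDl; congr (_ * _); lra.
have Hm : Num.ceil ((t - a) / hh n) = m by [].
rewrite Hm; move=> [k1 k3]; move: k1 k3; rewrite !ltr_norml => /andP[k1 k2] /andP[k3 k4].
have e1 : (y - t) / hh n < m%:~R - x by rewrite ltr_pdivrMr.
have e2 : - (x - (m - 1)%:~R) < (y - t) / hh n.
  by rewrite ltr_pdivlMr // mulNr.
apply/andP; split; lra.
Qed.

Lemma qq_ev (w : Path) t : a <= t < b -> \forall n \near \oo, w (qq n t) = w t.
Proof.
move=> /andP[ha tb].
have [J HJ] := pth_pcrc w a b.
have [d2 d2p H2] := finite_avoid t J.
pose d := Num.min d2 (b - t).
have dp : 0 < d by rewrite lt_min d2p subr_gt0 tb.
exists `|Num.ceil ((b - a) / d)|%N => // n /= Nn.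
have hd : hh n < d.
  rewrite /hh ltr_pdivrMr ?ltr0n // mulrC -ltr_pdivrMr //.
  apply: (le_lt_trans (ceil_ge _)).
  have cz : 0 <= Num.ceil ((b - a) / d).
    by rewrite ceil_ge0 (@lt_le_trans _ _ 0) // divr_ge0 // ?subr_ge0 ?ltW.
  rewrite -(gez0_abs cz) [X in X < _](_ : _ = (`|Num.ceil ((b - a) / d)|%N)%:R) // ltr_nat ltnS //.
have /andP[q1 q2] := qq_itv n t.
have := hd; rewrite lt_min => /andP[hd2 hdb].
symmetry; apply: HJ => //.
- lra.
- move=> j jJ [tj jq].
  have jt : j != t by rewrite gt_eqF.
  have := H2 j jJ jt; rewrite ger0_norm; last lra.
  lra.
Qed.

Lemma gn_cvg (T : R) (c : R -> X -> R) (w : Path) : 0 <= T -> Linf_cost T c ->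
  0 <= a -> b <= T ->
  (\int[mu]_(t in `[a, b[) c t (w (qq n t))) @[n --> \oo] --> Icost c a b w.
Proof.
move=> T0 Hc a0 bT.
have Dsub : `[a, b[%classic `<=` `[a, b]%classic by apply: subset_itv; rewrite bnd_simp.
have mc x : measurable_fun `[a, b] (c^~ x) by apply: cx_meas.
have mfn n : measurable_fun `[a, b[ (EFin \o (fun t => c t (w (qq n t)))).
  apply/measurable_EFinP; apply: measurable_funS Dsub _ => //.
  exact: (@lc_meas _ _ c a b _ (grid n) mc (@qq_LC w n)).
have mf : measurable_fun `[a, b[ (EFin \o (fun t => c t (w t))).
  apply/measurable_EFinP; apply: measurable_funS Dsub _ => //.
  have [J HJ] := pcrc_lc a b (pth_pcrc w).
  exact: (@lc_meas _ _ c a b _ J mc HJ).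
have ig : mu.-integrable `[a, b[ (EFin \o Gc c).
  by apply: integrableS (Gc_int T0 Hc) => //; apply: subset_itv; rewrite bnd_simp.
have ff : {ae mu, forall t, `[a, b[%classic t ->
    (fun n => (EFin \o (fun t => c t (w (qq n t)))) t) @ \oo --> (EFin \o (fun t => c t (w t))) t}.
  apply: aeW => t; rewrite /= in_itv /= => Dt.
  apply: cvg_near_cst; apply: filterS (qq_ev w Dt) => n /= ->; done.
have fg : {ae mu, forall t n, `[a, b[%classic t ->
    (`|(EFin \o (fun t => c t (w (qq n t)))) t| <= (EFin \o Gc c) t)%E}.
  by apply: aeW => t n _; rewrite /= lee_fin cG.
have [If _ H] := @dominated_convergence _ _ _ mu _ (measurable_itv _) _ _ _ mfn mf ff ig fg.
rewrite /Icost -(Rintegral_itv_bndo_bndc If) /Rintegral.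
have fin : (\int[mu]_(x in `[a, b[) (EFin \o (fun t => c t (w t))) x)%E \is a fin_num.
  by apply: integrable_fin_num.
rewrite -(fineK fin) in H.
exact: (fine_cvg H).
Qed.

End P6.

Section P7.
Context (R : realType) (X : finType) (x0 : X).
Local Notation mu := (@lebesgue_measure R).
Local Notation Path := (Path R X x0).
Local Notation PS a b := (g_sigma_algebraType (coord_gen x0 a b)).

Lemma FM_to (a b : R) (F : Path -> R) :
  (forall B, measurable B -> Fsig x0 a b (F @^-1` B)) ->
  measurable_fun [set: PS a b] (F : PS a b -> R).
Proof. by move=> H _ B mB; rewrite setTI; exact: H. Qed.

Lemma Zspace_cst (s k : R) : Zspace s (fun _ : Path => k).
Proof.
split; first by apply: FM_of; exact: measurable_cst.
by exists `|k|.
Qed.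

Lemma Zspace_add (s : R) (Z1 Z2 : Path -> R) : Zspace s Z1 -> Zspace s Z2 ->
  Zspace s (fun w => Z1 w + Z2 w).
Proof.
move=> [m1 [M1 b1]] [m2 [M2 b2]]; split.
  apply: FM_of; apply: measurable_funD; exact: FM_to.
exists (M1 + M2) => w; apply: (le_trans (ler_normD _ _)); exact: lerD.
Qed.

Lemma Zspace_coord (s : R) (f : X -> R) : 0 <= s -> Zspace s (fun w : Path => f (w s)).
Proof.
move=> s0; split.
  apply: FM_of; apply: (@fincoord_meas _ _ _ _ _ [:: s]).
    by move=> y; rewrite inE => /eqP ->; rewrite s0 lexx.
  by move=> w w' H; rewrite H // inE.
exists (\sum_(x : X) `|f x|) => w.
rewrite (bigD1 (w s)) //= lerDl; exact: sumr_ge0.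
Qed.

Lemma Zspace_Icost (T : R) (c : R -> X -> R) (s a b : R) : 0 <= T -> Linf_cost T c ->
  0 <= a -> a <= b -> b <= s -> b <= T -> Zspace s (fun w : Path => Icost c a b w).
Proof.
move=> T0 Hc a0 ab bs bT; split; last first.
  by exists (MG T c) => w; exact: Icost_bound.
apply: FM_of.
have [eab|ltab] := eqVneq a b.
  rewrite -eab.
  have -> : (fun w : Path => Icost c a a w) = fun _ => 0.
    by apply/funext => w; rewrite /Icost set_itv1 Rintegral_set1.
  exact: measurable_cst.
have ltab' : a < b by rewrite lt_neqAle ltab ab.
apply: (@measurable_fun_cvg _ _ _ _
   (fun n (w : PS 0 s) => \int[mu]_(t in `[a, b[) c t (w (qq a b n t)))).
  move=> n; apply: (@fincoord_meas _ _ _ _ _ (grid a b n)).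
    move=> y /(grid_itv ltab') /andP[ay yb]; apply/andP; split.
      exact: le_trans a0 ay.
    exact: le_trans yb bs.
  move=> w w' H; apply: eq_Rintegral => t; rewrite inE /= in_itv /= => /andP[ta tb].
  rewrite H //; apply: qq_grid => //; by rewrite ta ltW.
move=> w _; exact: (gn_cvg ltab' T0 Hc a0 bT).
Qed.

End P7.


Section P8.
Context (R : realType) (X : finType) (x0 : X).
Local Notation Path := (Path R X x0).

Definition samelaw (P : probability (PathM R X x0) R) (V W : Path -> R) :=
  forall B : set R, measurable B -> P (V @^-1` B) = P (W @^-1` B).

Lemma st_shift (P : probability (PathM R X x0) R) (V W : Path -> R) (K : R) :
  samelaw P V W -> st_le P (fun w => K + V w) (fun w => K + W w).
Proof.
move=> H eta.
have E (U : Path -> R) : [set w | eta < K + U w] = U @^-1` `]eta - K, +oo[.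
  by apply/seteqP; split => w /=; rewrite in_itv /= andbT ltrBlDr addrC.
rewrite !E H //; exact: measurable_itv.
Qed.

End P8.

Unset Implicit Arguments.

Theorem theorem4p1 (R : realType) (X : finType) (x0 : X) (T : R)
    (Q : R -> R -> X -> X -> R)
    (P : R -> R -> X -> probability (PathM R X x0) R)
    (rho : R -> (Path R X x0 -> R) -> (Path R X x0 -> R)) :
  0 < T ->
  has_bounded_rates T Q ->
  (forall t r x, 0 <= t -> t <= r -> r <= T -> chain_law Q t r x (P t r x)) ->
  dynamic_risk_measure T rho ->
  stoch_cond_time_consistent T P rho ->
  normalized T rho ->
  translation_invariant T rho ->
  forall (t r : R), 0 <= t -> t <= r -> r <= T ->
  forall xi : Path R X x0,
  exists vs : (Path R X x0 -> R) -> R,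
    law_invariant t r (P t r (xi t)) vs /\
    forall (c : R -> X -> R) (f : X -> R), Linf_cost T c ->
      rho t (fun w => Icost c 0 T w + f (w T)) xi
      = Icost c 0 t xi
        + vs (fun w => Icost c t r w
                       + rho r (fun w' => Icost c r T w' + f (w' T))
                             (concat t xi w)).
Proof.
move=> Tpos _ _ _ htc _ hti t r t0 tr rT xi.
have T0 : 0 <= T by exact: ltW.
have r0 : 0 <= r by exact: le_trans t0 tr.
have tT : t <= T by exact: le_trans tr rT.
set PP := P t r (xi t).
pose Z (cf : (R -> X -> R) * (X -> R)) := fun w : Path R X x0 => Icost cf.1 0 T w + cf.2 (w T).
pose arg (cf : (R -> X -> R) * (X -> R)) := fun w : Path R X x0 => Icost cf.1 t r w
   + rho r (fun w' => Icost cf.1 r T w' + cf.2 (w' T)) (concat t xi w).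
pose val (cf : (R -> X -> R) * (X -> R)) := rho t (Z cf) xi - Icost cf.1 0 t xi.
have Zs cf : Linf_cost T cf.1 -> Zspace T (Z cf).
  move=> Hc; apply: Zspace_add; last exact: (Zspace_coord x0 cf.2 T0).
  exact: (Zspace_Icost x0 T0 Hc (lexx 0) T0 (lexx T) (lexx T)).
have COND cf : Linf_cost T cf.1 -> forall w,
    rho r (Z cf) (concat t xi w) = Icost cf.1 0 t xi + arg cf w.
  move=> Hc w.
  have E : Z cf = fun w => (fun w => Icost cf.1 0 r w) w + (fun w => Icost cf.1 r T w + cf.2 (w T)) w.
    by apply/funext => w'; rewrite /Z /= (Icost_split T0 Hc w' (lexx 0) r0 rT (lexx T)) addrA.
  have H := hti r (fun w => Icost cf.1 0 r w) (fun w => Icost cf.1 r T w + cf.2 (w T))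
    (introT andP (conj r0 rT)) (Zspace_Icost x0 T0 Hc (lexx 0) r0 (lexx r) rT)
    (Zspace_add (Zspace_Icost x0 T0 Hc r0 rT (lexx T) (lexx T)) (Zspace_coord x0 cf.2 T0)).
  rewrite E H /= (Icost_concat T0 Hc xi w t0 tr rT) /arg; by rewrite addrA.
have KEY cf cf' : Linf_cost T cf.1 -> Linf_cost T cf'.1 ->
    samelaw PP (arg cf) (arg cf') -> val cf = val cf'.
  move=> Hc Hc' HL.
  set K := Icost cf.1 0 t xi; set K' := Icost cf'.1 0 t xi.
  pose Z2 := fun w => (fun _ : Path R X x0 => K - K') w + Z cf' w.
  have Z2s : Zspace T Z2 := Zspace_add (Zspace_cst x0 T (K - K')) (Zs cf' Hc').
  have HZ2t := hti t (fun _ => K - K') (Z cf') (introT andP (conj t0 tT))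
    (Zspace_cst x0 t (K - K')) (Zs cf' Hc').
  have HZ2r := hti r (fun _ => K - K') (Z cf') (introT andP (conj r0 rT))
    (Zspace_cst x0 r (K - K')) (Zs cf' Hc').
  have C1 : cond_given rho t r xi (Z cf) = fun w => K + arg cf w.
    by apply/funext => w; rewrite /cond_given COND.
  have C2 : cond_given rho t r xi Z2 = fun w => K + arg cf' w.
    apply/funext => w; rewrite /cond_given /Z2 HZ2r /= COND //.
    by rewrite -/K' addrA subrK.
  have le1 : rho t (Z cf) xi <= rho t Z2 xi.
    apply: (htc t r xi) => //; first exact: Zs.
    by rewrite C1 C2; apply: st_shift.
  have le2 : rho t Z2 xi <= rho t (Z cf) xi.
    apply: (htc t r xi) => //; first exact: Zs.
    by rewrite C1 C2; apply: st_shift => B mB; rewrite HL.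
  have eq : rho t (Z cf) xi = rho t Z2 xi by apply: le_anti; rewrite le1 le2.
  rewrite /val eq /Z2 HZ2t /= -/K -/K'.
  set u := rho t (Z cf') xi; lra.
pose vs (V : Path R X x0 -> R) :=
  if pselect (exists cf, Linf_cost T cf.1 /\ samelaw PP (arg cf) V) is left H
  then val (projT1 (cid H)) else 0.
exists vs; split.
  move=> V W _ _ HVW; rewrite /vs.
  case: pselect => [HV|nV]; case: pselect => [HW|nW] //.
  - case: cid => cf [Hc HcV]; case: cid => cf' [Hc' HcW].
    by apply: KEY => // B mB; rewrite HcV // HVW // -HcW.
  - exfalso; apply: nW; case: HV => cf [Hc HcV]; exists cf; split => // B mB.
    by rewrite HcV // HVW.
  - exfalso; apply: nV; case: HW => cf [Hc HcW]; exists cf; split => // B mB.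
    by rewrite HcW // HVW.
move=> c f Hc.
have -> : (fun w => Icost c t r w + rho r (fun w' => Icost c r T w' + f (w' T)) (concat t xi w))
  = arg (c, f) by [].
rewrite /vs; case: pselect => [H|[]]; last by exists (c, f); split.
case: cid => cf [Hcf Hsame].
rewrite (KEY cf (c, f) Hcf Hc Hsame) /val /Z /=.
by rewrite addrC subrK.
Qed.
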